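(* Let $T_1,\dots,T_m$ be conjunctions over variables $x_1,\dots,x_n$, presented online, each of which is the union of some subset of metafeatures $m_1,\dots,m_k$ satisfying the anchor-variable condition. Consider the following online procedure (Algorithm 4): initialize $\mathrm{TS}=\emptyset$ and $\tilde M=\emptyset$; for $r=1,\dots,m$, if $T_r$ is not equal to the union of the metafeatures in $\tilde M$ contained in $T_r$, then (''learning $T_r$ from scratch'') append $T_r$ to $\mathrm{TS}$ and replace $\tilde M$ by the output of Algorithm 3 run on $\mathrm{TS}$. Then the number of targets learned from scratch (appended to $\mathrm{TS}$) is at most $n^2+k$.
   Context: A conjunction/monomial is identified with its set of variables. Metafeatures $m_1,\dots,m_k$ satisfy the anchor-variable condition if each $m_i$ contains a variable $y_i$ belonging to no other $m_j$. For a variable $z$, $N(\mathrm{TS},z)$ is the set of conjunctions in $\mathrm{TS}$ containing $z$. Algorithm 3, on an ordered list $\mathrm{TS}$ of conjunctions: start with no hypothesized metafeatures; for a conjunction $T$ let $h(T)$ be the union of all hypothesized metafeatures produced so far contained in $T$; while some $T\in\mathrm{TS}$ has $T\ne h(T)$, take the least-index such $T$, choose $z\in T\setminus h(T)$ minimal in the sense that no $z'\in T\setminus h(T)$ has $N(\mathrm{TS},z')\subsetneq N(\mathrm{TS},z)$ (ties broken by least variable index), and add the metafeature $\bigcap_{T'\in\mathrm{TS},\,z\in T'}T'$. Output all metafeatures produced. *)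

(* Defs.v *)
(* Variables x_1..x_n are 'I_n; a conjunction/monomial is
   identified with its set of variables, i.e. an element of {set 'I_n}. *)
From mathcomp Require Import all_boot all_order.
Set Implicit Arguments. Unset Strict Implicit. Unset Printing Implicit Defensive.

Section Algs.
Variable n : nat.
Notation conj := {set 'I_n}.

Definition hM (M : seq conj) (T : conj) : conj :=
  \bigcup_(m <- M | m \subset T) m.

(* N(TS,z') is a proper subset of N(TS,z), where N(TS,z) is the set of
   conjunctions of TS containing z *)
Definition Nsub (TS : seq conj) (z' z : 'I_n) : bool :=
  all (fun T' : conj => (z' \in T') ==> (z \in T')) TS &&
  has (fun T' : conj => (z \in T') && (z' \notin T')) TS.

Definition newmf (TS : seq conj) (z : 'I_n) : conj :=
  foldr (fun T' acc : conj => T' :&: acc) setT [seq T' <- TS | z \in (T' : conj)].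

(* one iteration of the while loop of Algorithm 3; None = loop exits *)
Definition alg3_step (TS M : seq conj) : option conj :=
  match ohead [seq T <- TS | (T : conj) != hM M T] with
  | None => None
  | Some T =>
    let cand (z : 'I_n) := (z \in T :\: hM M T) &&
                  [forall z', (z' \in T :\: hM M T) ==> ~~ Nsub TS z' z] in
    match ohead [seq z <- enum 'I_n | cand z] with
    | None => None
    | Some z => Some (newmf TS z)
    end
  end.

Fixpoint alg3_fuel (fuel : nat) (TS M : seq conj) : seq conj :=
  match fuel with
  | 0 => M
  | f.+1 => match alg3_step TS M with
            | None => M
            | Some m => alg3_fuel f TS (rcons M m)
            end
  end.

(* Algorithm 3. Each loop iteration strictly increases sum_{T in TS} |h(T)|,
   which is at most n * size TS, so this fuel suffices for the loop to exit. *)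
Definition alg3 (TS : seq conj) : seq conj :=
  alg3_fuel (n * size TS).+1 TS [::].

Definition alg4_step (st : seq conj * seq conj) (T : conj) :=
  let: (TS, M) := st in
  if T != hM M T then (rcons TS T, alg3 (rcons TS T)) else (TS, M).

Definition alg4 (targets : seq conj) : seq conj * seq conj :=
  foldl alg4_step ([::], [::]) targets.

End Algs.

Definition anchor_cond (n k : nat) (mf : 'I_k -> {set 'I_n}) : Prop :=
  forall i : 'I_k, exists y : 'I_n,
    y \in mf i /\ forall j : 'I_k, j != i -> y \notin mf j.

(* Main.v *)
Require Import Defs.
From mathcomp Require Import all_boot all_order.
From mathcomp Require Import zify.
Set Implicit Arguments. Unset Strict Implicit. Unset Printing Implicit Defensive.

Section Aux.
Variable n : nat.
Notation conj := {set 'I_n}.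

Definition sub (TS : seq conj) (a b : 'I_n) : bool :=
  all (fun T : conj => (a \in T) ==> (b \in T)) TS.

Lemma NsubE TS z' z : Nsub TS z' z = sub TS z' z && ~~ sub TS z z'.
Proof.
rewrite /Nsub /sub; congr (_ && _).
rewrite -has_predC; apply: eq_has => T /=.
by case: (z \in T); case: (z' \in T).
Qed.

Lemma sub_refl TS a : sub TS a a.
Proof. by apply/allP => T _; apply/implyP. Qed.

Lemma sub_trans TS a b c : sub TS a b -> sub TS b c -> sub TS a c.
Proof.
move=> /allP H1 /allP H2; apply/allP => T HT; apply/implyP => Ha.
by move: (H1 T HT) (H2 T HT) => /implyP/(_ Ha) Hb /implyP/(_ Hb).
Qed.

Lemma sub_rcons TS T a b :
  sub (rcons TS T) a b = ((a \in T) ==> (b \in T)) && sub TS a b.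
Proof. by rewrite /sub all_rcons. Qed.

Lemma in_newmf TS z b : (b \in newmf TS z) = sub TS z b.
Proof.
elim: TS => [|T TS IH]; first by rewrite /newmf /= inE.
rewrite /newmf /= /sub /=. case Hz: (z \in T) => /=.
  by rewrite inE -/(newmf TS z) IH.
by rewrite -/(newmf TS z) IH.
Qed.

Lemma newmf_eq TS z w : sub TS z w -> sub TS w z -> newmf TS z = newmf TS w.
Proof.
move=> H1 H2; apply/setP => b; rewrite !in_newmf.
apply/idP/idP => H; [exact: sub_trans H2 H | exact: sub_trans H1 H].
Qed.

Lemma newmf_subset (TS : seq conj) (T : conj) z : T \in TS -> z \in T -> newmf TS z \subset T.
Proof.
move=> HT Hz; apply/subsetP => b; rewrite in_newmf => /allP/(_ T HT).
by rewrite Hz.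
Qed.

Lemma in_hM (M : seq conj) (T : conj) x :
  (x \in hM M T) = has (fun m : conj => (m \subset T) && (x \in m)) M.
Proof.
elim: M => [|m M IH]; first by rewrite /hM big_nil inE.
rewrite /hM big_cons -/(hM M T) /=; case: (m \subset T) => //=.
by rewrite inE IH.
Qed.

Lemma hM_sub (M : seq conj) (T : conj) : hM M T \subset T.
Proof.
apply/subsetP => x; rewrite in_hM => /hasP [m _ /andP [/subsetP H Hx]].
exact: H.
Qed.

Lemma count_le (A : Type) (p q : pred A) s :
  all (fun t => p t ==> q t) s -> count p s <= count q s.
Proof.
elim: s => [|t s IH] //= /andP [Ht Hs].
by apply: leq_add; [case: (p t) Ht => //= ->| exact: IH].
Qed.

Lemma count_lt (A : Type) (p q : pred A) s :
  all (fun t => p t ==> q t) s -> has (fun t => q t && ~~ p t) s ->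
  count p s < count q s.
Proof.
elim: s => [|t s IH] //= /andP [Ht Hs] /orP [/andP [Hq Hp]|Hh].
  rewrite (negbTE Hp) Hq /= add0n add1n ltnS; exact: count_le.
rewrite -addnS; apply: leq_add; last exact: IH.
by case: (p t) Ht => //= ->.
Qed.

Definition cnt (TS : seq conj) (z : 'I_n) := count (fun T : conj => z \in T) TS.

Lemma Nsub_cnt TS z' z : Nsub TS z' z -> cnt TS z' < cnt TS z.
Proof. by move=> /andP [H1 H2]; apply: count_lt. Qed.

Lemma exists_min (TS : seq conj) (D : conj) x :
  x \in D -> exists z, [/\ z \in D, sub TS z x &
     [forall z', (z' \in D) ==> ~~ Nsub TS z' z]].
Proof.
move=> Hx.
suff: forall c y, cnt TS y <= c -> y \in D -> sub TS y x -> exists z, [/\ z \in D, sub TS z x &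
     [forall z', (z' \in D) ==> ~~ Nsub TS z' z]].
  by move/(_ _ x (leqnn _) Hx (sub_refl _ _)).
elim => [|c IH] y Hc Hy Hyx;
  (case: (boolP [forall z', (z' \in D) ==> ~~ Nsub TS z' y]) => Hm;
   first by exists y);
  move: Hm; rewrite negb_forall => /existsP [z'];
  rewrite negb_imply negbK => /andP [Hz' HN].
  by move: (Nsub_cnt HN); rewrite ltnNge (leq_trans Hc (leq0n _)).
apply: (IH z') => //.
  by rewrite -ltnS; apply: leq_trans (Nsub_cnt HN) Hc.
by move: HN; rewrite NsubE => /andP [H _]; apply: sub_trans H Hyx.
Qed.


Lemma ohead_some (A : eqType) (s : seq A) x : ohead s = Some x -> x \in s.
Proof. by case: s => //= y s [->]; rewrite mem_head. Qed.

Lemma ohead_none (A : eqType) (s : seq A) x : ohead s = None -> x \in s -> False.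
Proof. by case: s. Qed.

Lemma setD_nonempty (T : conj) (M : seq conj) :
  T != hM M T -> exists x, x \in T :\: hM M T.
Proof.
move=> H; apply/set0Pn; rewrite setD_eq0; apply: contra H => H.
by rewrite eqEsubset H hM_sub.
Qed.

Lemma step_none (TS M : seq conj) :
  alg3_step TS M = None -> forall T, T \in TS -> T = hM M T.
Proof.
rewrite /alg3_step; case E: (ohead _) => [T0|].
  case E2: (ohead _) => [z|] // _.
  have HT0 := ohead_some E; rewrite mem_filter in HT0.
  case/andP: HT0 => HT0 _.
  case: (setD_nonempty HT0) => x Hx.
  case: (exists_min TS Hx) => z0 [Hz0 _ Hm].
  exfalso; apply: (ohead_none (x := z0) E2).
  by rewrite mem_filter Hz0 Hm mem_enum.
move=> _ T HT; apply/eqP; apply: negbNE; apply/negP => HN.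
by apply: (ohead_none (x := T) E); rewrite mem_filter HN.
Qed.

Lemma step_some (TS M : seq conj) m :
  alg3_step TS M = Some m -> exists T z,
    [/\ T \in TS, z \in T, z \notin hM M T & m = newmf TS z].
Proof.
rewrite /alg3_step; case E: (ohead _) => [T0|] //.
case E2: (ohead _) => [z|] // [<-].
have := ohead_some E; rewrite mem_filter => /andP [_ HT0].
have := ohead_some E2; rewrite mem_filter => /andP [/andP [Hz _] _].
move: Hz; rewrite inE => /andP [Hz1 Hz2].
by exists T0, z.
Qed.


Definition pot (TS M : seq conj) := sumn [seq #|hM M T| | T <- TS].

Lemma pot_le (TS M : seq conj) : pot TS M <= n * size TS.
Proof.
rewrite /pot; elim: TS => [|T TS IH] //=.
rewrite mulnS; apply: leq_add => //.
by apply: leq_trans (max_card _) _; rewrite card_ord.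
Qed.

Lemma hM_rcons_sub (M : seq conj) m (T : conj) : hM M T \subset hM (rcons M m) T.
Proof. by apply/subsetP => x; rewrite !in_hM has_rcons => ->; rewrite orbT. Qed.

Lemma sumn_le (f g : conj -> nat) s :
  (forall T, f T <= g T) -> sumn (map f s) <= sumn (map g s).
Proof. by move=> H; elim: s => //= T s IH; apply: leq_add. Qed.

Lemma sumn_lt (f g : conj -> nat) s T0 :
  (forall T, f T <= g T) -> T0 \in s -> f T0 < g T0 ->
  sumn (map f s) < sumn (map g s).
Proof.
move=> H; elim: s => //= T s IH; rewrite in_cons => /orP [/eqP ->|Hin] Hlt.
  by rewrite -addSn; apply: leq_add => //; apply: sumn_le.
by rewrite -addnS; apply: leq_add => //; apply: IH.
Qed.

Lemma pot_incr (TS M : seq conj) m :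
  alg3_step TS M = Some m -> pot TS M < pot TS (rcons M m).
Proof.
case/step_some => T [z [HT Hz Hnz ->]].
apply: (sumn_lt (T0 := T)) => // [T'|]; first exact/subset_leq_card/hM_rcons_sub.
apply: proper_card; rewrite properE hM_rcons_sub /=.
apply/subsetPn; exists z => //.
by rewrite in_hM has_rcons newmf_subset //= in_newmf sub_refl.
Qed.

Lemma fuel_ok (TS : seq conj) f M :
  n * size TS < f + pot TS M -> (forall m, m \in M -> exists w, m = newmf TS w) ->
  (forall T, T \in TS -> T = hM (alg3_fuel f TS M) T) /\
  (forall m, m \in alg3_fuel f TS M -> exists w, m = newmf TS w).
Proof.
elim: f M => [|f IH] M Hf HM.
  by move: Hf; rewrite add0n ltnNge pot_le.
rewrite /=; case E: (alg3_step TS M) => [m|]; last first.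
  by split => //; apply: step_none.
apply: IH.
  by apply: leq_trans Hf _; rewrite addSn -addnS leq_add2l; apply: pot_incr.
move=> m'; rewrite mem_rcons in_cons => /orP [/eqP ->|]; last exact: HM.
by case/step_some: E => T [z [_ _ _ ->]]; exists z.
Qed.

Lemma alg3_ok (TS : seq conj) :
  (forall T, T \in TS -> T = hM (alg3 TS) T) /\
  (forall m, m \in alg3 TS -> exists w, m = newmf TS w).
Proof. by apply: fuel_ok => //; rewrite addSn ltnS leq_addr. Qed.


Definition minb (TS : seq conj) (T : conj) z :=
  (z \in T) && [forall z', (z' \in T) ==> ~~ Nsub TS z' z].
Definition Min (TS : seq conj) : {set conj} :=
  [set X | [exists z, has (fun T => minb TS T z) TS && (X == newmf TS z)]].
Definition Pr (TS : seq conj) : {set 'I_n * 'I_n} :=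
  [set ab | has (fun T : conj => (ab.1 \in T) && ((ab.2 \in T) ==> (ab.1 == ab.2))) TS].
Definition Phi TS := #|Pr TS| + #|Min TS|.

Lemma Min_in_alg3 (TS : seq conj) X : X \in Min TS -> X \in alg3 TS.
Proof.
rewrite inE => /existsP [z /andP [/hasP [T HT /andP [Hz Hm]] /eqP ->]].
case: (alg3_ok TS) => Hcov Hel.
have: z \in hM (alg3 TS) T by rewrite -Hcov.
rewrite in_hM => /hasP [m Hm' /andP [Hsub Hzm]].
case: (Hel m Hm') => w Ew; rewrite Ew in Hsub Hzm Hm'.
have Hw: w \in T by apply: (subsetP Hsub); rewrite in_newmf sub_refl.
have Hwz: sub TS w z by rewrite -in_newmf.
have: ~~ Nsub TS w z by move/forallP: Hm => /(_ w); rewrite Hw.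
rewrite NsubE Hwz /= negbK => Hzw.
by rewrite (newmf_eq Hzw Hwz).
Qed.

Lemma Pr_sub (TS : seq conj) T : Pr TS \subset Pr (rcons TS T).
Proof. by apply/subsetP => ab; rewrite !inE has_rcons => ->; rewrite orbT. Qed.

Lemma Phi_incr (TS M : seq conj) T :
  (forall X, X \in Min TS -> X \in M) -> T != hM M T ->
  Phi TS < Phi (rcons TS T).
Proof.
move=> HM HT.
set TS' := rcons TS T.
have gained: 0 < #|Min TS' :\: Min TS|.
  rewrite card_gt0; apply/negP => /eqP H0.
  move: H0 => /eqP; rewrite setD_eq0 => Hsub.
  apply: (negP HT); rewrite eqEsubset hM_sub andbT; apply/subsetP => w Hw.
  case: (exists_min TS' Hw) => z [HzT Hzw Hm].
  have HX: newmf TS' z \in Min TS'.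
    by rewrite inE; apply/existsP; exists z; rewrite eqxx andbT has_rcons /minb HzT Hm.
  have := HM _ (subsetP Hsub _ HX).
  rewrite in_hM => Hin; apply/hasP; exists (newmf TS' z) => //.
  by rewrite newmf_subset ?mem_rcons ?mem_head //= in_newmf.
set Zl := [set z | has (fun T0 => minb TS T0 z) TS && (newmf TS z \notin Min TS')].
have L1: Min TS :\: Min TS' \subset [set newmf TS z | z in Zl].
  apply/subsetP => X; rewrite inE => /andP [HX']; rewrite inE.
  move=> /existsP [z /andP [Hh /eqP EX]]; apply/imsetP; exists z => //.
  by rewrite inE Hh -EX HX'.
have L2: Zl \subset [set ab.1 | ab in Pr TS' :\: Pr TS].
  apply/subsetP => z; rewrite inE => /andP [Hh Hnot].
  case: (boolP [exists b, sub TS z b && ~~ sub TS' z b]).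
    move=> /existsP [b /andP [Hb Hb']].
    move: Hb'; rewrite sub_rcons Hb andbT negb_imply => /andP [HzT HbT].
    apply/imsetP; exists (z, b) => //.
    rewrite !inE has_rcons /= HzT (negbTE HbT) /=.
    rewrite andbT; apply/hasPn => T' HT'; apply/negP => /andP [HzT' Himp].
    move/allP: Hb => /(_ T' HT'); rewrite HzT' /= => HbT'.
    move: Himp; rewrite HbT' /= => /eqP Ezb.
    by move: HzT HbT; rewrite Ezb => ->.
  rewrite negb_exists => /forallP Hall.
  have Hsb: forall b, sub TS z b -> sub TS' z b.
    by move=> b Hb; move: (Hall b); rewrite Hb /= negbK.
  have Eq: newmf TS' z = newmf TS z.
    apply/setP => b; rewrite !in_newmf; apply/idP/idP; last exact: Hsb.
    by rewrite sub_rcons => /andP [].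
  exfalso; move: Hnot; rewrite -Eq inE; apply/negP; apply/negPn.
  apply/existsP; exists z; rewrite eqxx andbT has_rcons.
  case/hasP: Hh => T0 HT0 /andP [HzT0 Hm0].
  apply/orP; right; apply/hasP; exists T0 => //.
  rewrite /minb HzT0 /=; apply/forallP => z'; apply/implyP => Hz'.
  move/forallP: Hm0 => /(_ z'); rewrite Hz' /= !NsubE.
  apply: contra => /andP [H1 H2]; move: H1; rewrite sub_rcons => /andP [_ H1].
  rewrite H1 /=; apply: contra H2; exact: Hsb.
have c1: #|Min TS :\: Min TS'| <= #|Pr TS' :\: Pr TS|.
  apply: leq_trans (subset_leq_card L1) _; apply: leq_trans (leq_imset_card _ _) _.
  apply: leq_trans (subset_leq_card L2) _; exact: leq_imset_card.
have c2 := cardsID (Pr TS) (Pr TS').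
move/setIidPr: (Pr_sub TS T) => E2; rewrite -/TS' in E2; rewrite E2 in c2.
have c3 := cardsID (Min TS') (Min TS).
have c4 := cardsID (Min TS) (Min TS'); rewrite setIC in c4.
rewrite /Phi; lia.
Qed.


Lemma Pr_card (TS : seq conj) : #|Pr TS| <= n ^ 2.
Proof. by apply: leq_trans (max_card _) _; rewrite card_prod card_ord mulnn. Qed.

Lemma Min_card k (mf : 'I_k -> conj) (Hanchor : anchor_cond mf) (TS : seq conj) :
  (forall T, T \in TS -> exists S : {set 'I_k}, T = \bigcup_(i in S) mf i) ->
  #|Min TS| <= k.
Proof.
move=> Hun.
have Ha: forall j, exists y, (y \in mf j) && [forall j', (j' != j) ==> (y \notin mf j')].
  move=> j; case: (Hanchor j) => y [H1 H2]; exists y; rewrite H1 /=.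
  by apply/forallP => j'; apply/implyP; exact: H2.
pose ya j := xchoose (Ha j).
have Hya: forall j, (ya j \in mf j) && [forall j', (j' != j) ==> (ya j \notin mf j')].
  by move=> j; exact: (xchooseP (Ha j)).
suff Hs: Min TS \subset [set newmf TS (ya j) | j in 'I_k].
  by apply: leq_trans (subset_leq_card Hs) _; apply: leq_trans (leq_imset_card _ _) _; rewrite card_ord.
apply/subsetP => X; rewrite inE => /existsP [z /andP [/hasP [T HT /andP [Hz Hm]] /eqP ->]].
case: (Hun T HT) => S ES.
move: (Hz); rewrite ES => /bigcupP [j HjS Hzj].
apply/imsetP; exists j => //.
case/andP: (Hya j) => Hyj Hyo.
have HyT: ya j \in T by rewrite ES; apply/bigcupP; exists j.
have Hyz: sub TS (ya j) z.
  apply/allP => T' HT'; apply/implyP.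
  case: (Hun T' HT') => S' ES'; rewrite ES' => /bigcupP [i HiS' Hyi].
  have Eij: i = j.
    apply/eqP; apply: contraLR Hyi => Hij.
    by move/forallP: Hyo => /(_ i); rewrite Hij.
  by apply/bigcupP; exists j => //; rewrite -Eij.
have: ~~ Nsub TS (ya j) z by move/forallP: Hm => /(_ (ya j)); rewrite HyT.
rewrite NsubE Hyz /= negbK => Hzy.
exact: newmf_eq.
Qed.

Definition inv (targets : seq conj) (st : seq conj * seq conj) :=
  [/\ {subset st.1 <= targets}, (forall X, X \in Min st.1 -> X \in st.2) &
      size st.1 <= Phi st.1].

Lemma inv_foldl (targets : seq conj) s st :
  {subset s <= targets} -> inv targets st -> inv targets (foldl (@alg4_step n) st s).
Proof.
elim: s st => [|T s IH] [TS M] //= Hs [H1 H2 H3].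
apply: IH; first by move=> x Hx; apply: Hs; rewrite in_cons Hx orbT.
rewrite /alg4_step; case: ifP => HT //.
split => /=.
- move=> x; rewrite mem_rcons in_cons => /orP [/eqP ->|]; last exact: H1.
  by apply: Hs; rewrite mem_head.
- by move=> X; apply: Min_in_alg3.
- by rewrite size_rcons; apply: leq_ltn_trans H3 (Phi_incr H2 HT).
Qed.

End Aux.

Theorem theorem3 (n k : nat) (mf : 'I_k -> {set 'I_n})
  (targets : seq {set 'I_n})
  (Hanchor : anchor_cond mf)
  (Hunion : forall T, T \in targets ->
     exists S : {set 'I_k}, T = \bigcup_(i in S) mf i) :
  size (alg4 targets).1 <= n ^ 2 + k.
Proof.
have := @inv_foldl n targets targets ([::], [::]) (fun x H => H).
case=> [|H1 H2 H3].
  split => //= X; rewrite inE => /existsP [z /andP [] //].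
rewrite /alg4; apply: leq_trans H3 _; rewrite /Phi; apply: leq_add.
  exact: Pr_card.
apply: (Min_card Hanchor) => T HT; apply: Hunion; exact: H1.
Qed.
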